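(* Let $K_1,K_2$ be simplicial complexes on $[m]$, $W=K_1\cap K_2$, $Z\subset W$ with $\varnothing\notin Z$ and $O_{K_1\cup K_2}(Z)\subset W$, and $K=K_1\#^ZK_2=\operatorname{Del}_Z(K_1\cup K_2)$. Let $\mathcal I_Z\subset\mathbb Z[K_1\cup K_2]$ be the ideal generated by $x_\sigma$, $\sigma\in Z$. Let $B$ be an integer $r\times m$ matrix of rank $r$, $u_i=\sum_jB_{ij}x_j$, $S=\mathbb Z[u_1,\dots,u_r]$, with $\mathbb Z$ an $S$-module via $u_i\mapsto0$. If $\operatorname{Tor}_1^S(\mathbb Z[K_1],\mathbb Z)=\operatorname{Tor}_1^S(\mathbb Z[K_2],\mathbb Z)=\operatorname{Tor}_1^S(\mathbb Z[K],\mathbb Z)=\operatorname{Tor}_1^S(\mathbb Z[W],\mathbb Z)=0$, then $$\operatorname{Tor}_0^S(\mathbb Z[K],\mathbb Z)\cong\operatorname{Tor}_0^S(\mathbb Z[K_1],\mathbb Z)\ \#^{\operatorname{Tor}_0^S(\mathcal I_Z,\mathbb Z)}_{\operatorname{Tor}_0^S(\mathbb Z[W],\mathbb Z)}\ \operatorname{Tor}_0^S(\mathbb Z[K_2],\mathbb Z),$$ where the maps $\operatorname{Tor}_0^S(\mathbb Z[K_i],\mathbb Z)\to\operatorname{Tor}_0^S(\mathbb Z[W],\mathbb Z)$ are induced by the natural quotient maps and $\operatorname{Tor}_0^S(\mathcal I_Z,\mathbb Z)\to\operatorname{Tor}_0^S(\mathbb Z[K_i],\mathbb Z)$ by $\mathcal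 I_Z\subset\mathbb Z[K_1\cup K_2]\to\mathbb Z[K_i]$.
   Context: $\mathbb Z[K]=\mathbb Z[x_1,\dots,x_m]/\langle x_\sigma:\sigma\notin K\rangle$ is the Stanley–Reisner ring, $x_\sigma=\prod_{i\in\sigma}x_i$. $O_K(Z)=\{\sigma\in K:\sigma\supseteq\tau$ for some $\tau\in Z\}$, $\operatorname{Del}_Z(K)=K\setminus O_K(Z)$. Connected sum of rings: given ring maps $\epsilon_A:A\to C$, $\epsilon_B:B\to C$, a $C$-module $V$ and module maps $\iota_A:V\to A$, $\iota_B:V\to B$ with $\epsilon_A\iota_A=\epsilon_B\iota_B$, $A\#_C^VB:=(A\times_CB)/\{(\iota_A(v),\iota_B(v)):v\in V\}$ with $A\times_CB=\{(a,b):\epsilon_A(a)=\epsilon_B(b)\}$. *)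

(* Defs.v *)
From HB Require Import structures.
From mathcomp Require Import all_boot all_order all_algebra.
From mathcomp Require Import mpoly.
Set Implicit Arguments. Unset Strict Implicit. Unset Printing Implicit Defensive.
Import GRing.Theory.
Local Open Scope ring_scope.

Notation Poly m := {mpoly int[m]}.

(* simplicial complex on [m] (ghost vertices allowed): nonempty, closed under subsets *)
Definition is_simplicial_complex m (K : {set {set 'I_m}}) : Prop :=
  set0 \in K /\ forall s t : {set 'I_m}, s \in K -> t \subset s -> t \in K.

Definition Ostar m (K Z : {set {set 'I_m}}) : {set {set 'I_m}} :=
  [set s in K | [exists t in Z, t \subset s]].
Definition Del m (Z K : {set {set 'I_m}}) : {set {set 'I_m}} := K :\: Ostar K Z.

Definition xmon m (s : {set 'I_m}) : Poly m := \prod_(i in s) 'X_i.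

Definition ideal_gen m (G : Poly m -> Prop) (p : Poly m) : Prop :=
  exists s : seq (Poly m * Poly m),
    (forall c, c \in s -> G c.2) /\ p = \sum_(c <- s) c.1 * c.2.

Definition ideal_add m (I J : Poly m -> Prop) (p : Poly m) : Prop :=
  exists a b, I a /\ J b /\ p = a + b.

(* Stanley--Reisner ideal I_K, so that Z[K] = Poly m / SR_ideal K *)
Definition SR_ideal m (K : {set {set 'I_m}}) : Poly m -> Prop :=
  ideal_gen (fun p => exists s, s \notin K /\ p = xmon s).

(* ideal generated by x_sigma, sigma in Z (its image in Z[L] is I_Z) *)
Definition mon_ideal m (Z : {set {set 'I_m}}) : Poly m -> Prop :=
  ideal_gen (fun p => exists s, s \in Z /\ p = xmon s).

Definition ulin r m (B : 'M[int]_(r, m)) (i : 'I_r) : Poly m :=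
  \sum_(j < m) (B i j)%:MP * 'X_j.

Definition U_ideal r m (B : 'M[int]_(r, m)) : Poly m -> Prop :=
  ideal_gen (fun p => exists i, p = ulin B i).

(* Tor_1^S(Poly m / I, Z) = 0, computed with the Koszul resolution
   ... -> S (x) Lambda^2 S^r -> S^r -> S -> Z of Z over S = Z[u_1..u_r]
   (a free resolution since u_1..u_r are algebraically independent when
   rank B = r).  H_1 of (Poly m / I) (x)_S Koszul vanishes iff every Koszul
   1-cycle is a boundary.  Elements of M (x) Lambda^2 S^r are represented by
   antisymmetric families a i j of representatives. *)
Definition Tor1_vanishes r m (B : 'M[int]_(r, m)) (I : Poly m -> Prop) : Prop :=
  forall c : 'I_r -> Poly m,
    I (\sum_(i < r) ulin B i * c i) ->
    exists a : 'I_r -> 'I_r -> Poly m,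
      (forall i j, a i j = - a j i) /\
      (forall k, I (c k - \sum_(i < r) a k i * ulin B i)).

(* Ring isomorphism between a quotient R1/E1 and a subquotient D2/E2 of R2,
   expressed on representatives: f induces a well-defined, injective,
   surjective ring homomorphism R1/E1 -> D2/E2. *)
Definition subquot_ring_iso (R1 R2 : pzRingType)
    (E1 : R1 -> R1 -> Prop) (D2 : R2 -> Prop) (E2 : R2 -> R2 -> Prop) : Prop :=
  exists f : R1 -> R2,
    (forall x, D2 (f x)) /\
    (forall x y, E1 x y <-> E2 (f x) (f y)) /\
    (forall x y, E2 (f (x + y)) (f x + f y)) /\
    (forall x y, E2 (f (x * y)) (f x * f y)) /\
    E2 (f 1) 1 /\
    (forall y, D2 y -> exists x, E2 (f x) y).

Definition eqmod m (I : Poly m -> Prop) (p q : Poly m) : Prop := I (p - q).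

(* Tor_0^S(Poly m / I, Z) = (Poly m / I) / (u)(Poly m / I) = Poly m / (I + (u)) *)
Definition Tor0_ideal r m (B : 'M[int]_(r, m)) (I : Poly m -> Prop) : Poly m -> Prop :=
  ideal_add I (U_ideal B).

(* Connected sum A #^V_C B with A = Poly/IA, B = Poly/IB, C = Poly/IC,
   eps_A, eps_B induced by the identity (quotient maps), and V represented by
   the set Vrep of polynomials, iota_A, iota_B induced by the identity.
   Fibre product: pairs (a,b) with eps_A a = eps_B b. *)
Definition fiber_dom m (IC : Poly m -> Prop) (x : Poly m * Poly m) : Prop :=
  IC (x.1 - x.2).
(* (a,b) ~ (a',b') iff (a,b) - (a',b') = (iota_A v, iota_B v) for some v in V *)
Definition connsum_rel m (IA IB Vrep : Poly m -> Prop) (x y : Poly m * Poly m) : Prop :=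
  exists w, Vrep w /\ IA (x.1 - y.1 - w) /\ IB (x.2 - y.2 - w).

(* Main.v *)
Require Import Defs.
From HB Require Import structures.
From mathcomp Require Import all_boot all_order all_algebra.
From mathcomp Require Import mpoly.
From mathcomp Require Import ring.
Import GRing.Theory Num.Theory.
Local Open Scope ring_scope.
Set Implicit Arguments. Unset Strict Implicit.

Section H.
Variable n : nat.
Implicit Types (K : {set {set 'I_n}}) (p q : {mpoly int[n]}) (t s : {set 'I_n}) (mm : 'X_{1..n}).

Definition supp mm : {set 'I_n} := [set i | (0 < mm i)%N].
Definition em t : 'X_{1..n} := (\sum_(i in t) U_(i))%MM.

Lemma emE t j : em t j = (j \in t).
Proof.
rewrite /em mnm_sumE (eq_bigr (fun i => nat_of_bool (i == j))) => [|i _]; last by rewrite mnm1E.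
case: (boolP (j \in t)) => Hj.
  by rewrite (bigD1 j) //= eqxx big1 // => i /andP[_ /negbTE ->].
by rewrite big1 // => i Hi; case: eqP => // Eij; rewrite -Eij Hi in Hj.
Qed.

Lemma xmonE t : xmon t = 'X_[em t].
Proof.
rewrite /xmon /em.
by rewrite (big_morph (fun m : 'X_{1..n} => 'X_[m] : {mpoly int[n]}) (@mpolyXD _ _) (@mpolyX0 _ _)).
Qed.

Lemma coef_xmon0 c t mm : ~~ (t \subset supp mm) -> (c * xmon t)@_mm = 0.
Proof.
move=> Ht; apply/eqP; rewrite mcoeff_eq0; apply/negP => H.
move: H; rewrite xmonE (perm_mem (msuppMX c (em t))) => /mapP [m' _ Em].
move/negP: Ht; apply; apply/subsetP => j Hj; rewrite inE Em mnmDE emE Hj.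
by [].
Qed.

Lemma term_in c t mm (P : {set 'I_n} -> Prop) : t \subset supp mm -> P t ->
  ideal_gen (fun q => exists s, P s /\ q = xmon s) (c *: 'X_[mm]).
Proof.
move=> Ht Pt.
have le : (em t <= mm)%MM.
  apply/mnm_lepP => j; rewrite emE; case: (boolP (j \in t)) => // /(subsetP Ht).
  by rewrite inE.
exists [:: (c *: 'X_[mm - em t], xmon t)]; split.
  by move=> x; rewrite mem_seq1 => /eqP -> /=; exists t.
by rewrite big_seq1 /= -scalerAl xmonE -mpolyXD submK.
Qed.

Lemma SR_term K (c : int) mm : supp mm \notin K -> SR_ideal K (c *: 'X_[mm]).
Proof. exact: (@term_in c (supp mm) mm (fun s => is_true (s \notin K)) (subxx _)). Qed.

Lemma mon_term (Z : {set {set 'I_n}}) (c : int) mm t : t \subset supp mm -> t \in Z -> mon_ideal Z (c *: 'X_[mm]).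
Proof. exact: (@term_in c t mm (fun s => is_true (s \in Z))). Qed.

Section Gen.
Variable G : {mpoly int[n]} -> Prop.
Local Notation I := (ideal_gen G).

Lemma gen0 : I 0.
Proof. by exists [::]; split => //; rewrite big_nil. Qed.

Lemma genD p q : I p -> I q -> I (p + q).
Proof.
move=> [s1 [H1 ->]] [s2 [H2 ->]]; exists (s1 ++ s2); split; last by rewrite big_cat.
by move=> c; rewrite mem_cat => /orP[/H1|/H2].
Qed.

Lemma genM a p : I p -> I (a * p).
Proof.
move=> [s [H ->]]; exists [seq (a * c.1, c.2) | c <- s]; split.
  by move=> c /mapP [c' Hc' ->] /=; apply: H.
by rewrite big_map mulr_sumr; apply: eq_bigr => c _; rewrite mulrA.
Qed.

Lemma genN p : I p -> I (- p).
Proof. by move=> H; rewrite -mulN1r; apply: genM. Qed.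

Lemma genB p q : I p -> I q -> I (p - q).
Proof. by move=> H1 H2; apply: genD => //; apply: genN. Qed.

Lemma gen_one a g : G g -> I (a * g).
Proof.
by move=> Hg; exists [:: (a, g)]; split; [move=> c; rewrite mem_seq1 => /eqP -> | rewrite big_seq1].
Qed.

Lemma gen_sum (T : eqType) (r : seq T) (P : pred T) F :
  (forall i, i \in r -> P i -> I (F i)) -> I (\sum_(i <- r | P i) F i).
Proof.
elim: r => [|x r IH] H; first by rewrite big_nil; apply: gen0.
rewrite big_cons; case: (boolP (P x)) => Px.
  apply: genD; first by apply: H => //; rewrite mem_head.
  by apply: IH => i Hi; apply: H; rewrite in_cons Hi orbT.
by apply: IH => i Hi; apply: H; rewrite in_cons Hi orbT.
Qed.
End Gen.

Lemma gen_mono (G1 G2 : {mpoly int[n]} -> Prop) p :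
  (forall g, G1 g -> G2 g) -> ideal_gen G1 p -> ideal_gen G2 p.
Proof. by move=> H [s [Hs ->]]; exists s; split => // c /Hs /H. Qed.

Lemma gen_coef0 (P : {set 'I_n} -> Prop) p mm :
  ideal_gen (fun q => exists s, P s /\ q = xmon s) p ->
  (forall s, P s -> ~~ (s \subset supp mm)) -> p@_mm = 0.
Proof.
move=> [sq [Hs ->]] HP; elim: sq Hs => [|c sq IH] Hs; first by rewrite big_nil mcoeff0.
rewrite big_cons mcoeffD IH; last by move=> x Hx; apply: Hs; rewrite in_cons Hx orbT.
have [s [Ps ->]] := Hs c (mem_head _ _).
by rewrite coef_xmon0 ?addr0 //; apply: HP.
Qed.

Definition Dc (K : {set {set 'I_n}}) := forall s t, s \in K -> t \subset s -> t \in K.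

Lemma SR_coef K p mm : Dc K -> SR_ideal K p -> supp mm \in K -> p@_mm = 0.
Proof.
move=> HK Hp Hm; apply: (@gen_coef0 (fun s => is_true (s \notin K)) p mm Hp) => s Hs; apply/negP => Hsub.
by move/negP: Hs; apply; apply: HK Hsub.
Qed.

Lemma SR_of_coef K p : (forall mm, supp mm \in K -> p@_mm = 0) -> SR_ideal K p.
Proof.
move=> H; rewrite (mpolyE p) -(big_filter _ xpredT) /= big_filter; apply: gen_sum => mm Hm _.
apply: SR_term; apply/negP => Hk.
by move: Hm; rewrite mcoeff_msupp H ?eqxx.
Qed.

Definition proj K p := \sum_(mm <- msupp p | supp mm \notin K) p@_mm *: 'X_[mm].

Lemma SR_split (K1 K2 : {set {set 'I_n}}) p : Dc K1 -> Dc K2 -> SR_ideal (K1 :&: K2) p ->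
  SR_ideal K1 (proj K1 p) /\ SR_ideal K2 (p - proj K1 p).
Proof.
move=> H1 H2 Hp; have HW : Dc (K1 :&: K2).
  move=> s t; rewrite !inE => /andP[a b] st; rewrite (H1 _ _ a st) (H2 _ _ b st) //.
split.
  apply: gen_sum => mm _ Hm; exact: SR_term.
rewrite {1}(mpolyE p) (bigID (fun mm => supp mm \notin K1)) /= /proj addrAC subrr add0r.
apply: gen_sum => mm Hm; rewrite negbK => Hk1.
apply: SR_term; apply/negP => Hk2.
by move: Hm; rewrite mcoeff_msupp (@SR_coef (K1 :&: K2) p mm HW Hp) ?eqxx // inE Hk1 Hk2.
Qed.

Lemma SR_inter (K1 K2 : {set {set 'I_n}}) p : Dc K1 -> Dc K2 -> SR_ideal K1 p -> SR_ideal K2 p ->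
  SR_ideal (K1 :|: K2) p.
Proof.
move=> H1 H2 P1 P2; apply: SR_of_coef => mm; rewrite inE => /orP[h|h].
  exact: (@SR_coef K1 p mm H1 P1 h).
exact: (@SR_coef K2 p mm H2 P2 h).
Qed.
End H.
Arguments Dc {n}.
Arguments proj {n}.
Arguments supp {n}.

Section U.
Variables (n r : nat) (B : 'M[int]_(r, n)).
Local Notation Pl := {mpoly int[n]}.

Lemma U_form {p : Pl} : U_ideal B p -> exists c : 'I_r -> Pl, p = \sum_i ulin B i * c i.
Proof.
case=> s [Hs ->]; elim: s Hs => [|x s IH] Hs.
  by exists (fun _ => 0); rewrite big_nil big1 // => i _; rewrite mulr0.
have [i Ei] := Hs x (mem_head _ _).
have [c Ec] := IH (fun y Hy => Hs y (@mem_behead _ (x :: s) _ Hy)).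
exists (fun j => c j + (if j == i then x.1 else 0)).
rewrite big_cons Ec (eq_bigr _ (fun j _ => mulrDr _ _ _)) big_split /=.
rewrite [X in _ = _ + X](bigD1 i) //= eqxx [X in _ = _ + (_ + X)]big1 ?addr0; last by move=> j Hj; rewrite (negbTE Hj) mulr0.
by rewrite Ei mulrC addrC.
Qed.

Lemma U_of (c : 'I_r -> Pl) : U_ideal B (\sum_i ulin B i * c i).
Proof.
apply: gen_sum => i _ _; rewrite mulrC; apply: gen_one; by exists i.
Qed.

Lemma antisym0 (A : 'I_r -> 'I_r -> Pl) : (forall i j, A i j = - A j i) ->
  \sum_k ulin B k * \sum_i A k i * ulin B i = 0.
Proof.
move=> HA.
set S := \sum_k _.
have E : S = - S.
  rewrite {1}/S (eq_bigr (fun k => \sum_i ulin B k * (A k i * ulin B i))); last by move=> k _; rewrite mulr_sumr.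
  rewrite exchange_big /= /S -sumrN; apply: eq_bigr => i _.
  rewrite mulr_sumr -sumrN; apply: eq_bigr => k _.
  by rewrite HA; ring.
apply/mpolyP => mm; rewrite mcoeff0.
have : S@_mm *+ 2 = 0 by rewrite -mcoeffMn mulr2n {1}E addNr mcoeff0.
by move/eqP; rewrite mulrn_eq0 /= => /eqP.
Qed.

Lemma core (K1 K2 : {set {set 'I_n}}) (v : Pl) : Dc K1 -> Dc K2 ->
  Tor1_vanishes B (SR_ideal (K1 :&: K2)) ->
  ideal_add (SR_ideal K1) (U_ideal B) v -> ideal_add (SR_ideal K2) (U_ideal B) v ->
  ideal_add (SR_ideal (K1 :|: K2)) (U_ideal B) v.
Proof.
move=> H1 H2 Tor [a1 [x1 [Ha1 [Hx1 E1]]]] [a2 [x2 [Ha2 [Hx2 E2]]]].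
have [c Ec] := U_form Hx1; have [d Ed] := U_form Hx2.
have lin : forall x y : 'I_r -> Pl,
    \sum_k ulin B k * (x k - y k) = \sum_k ulin B k * x k - \sum_k ulin B k * y k.
  by move=> x y; rewrite -sumrB; apply: eq_bigr => k _; rewrite mulrBr.
have HW : SR_ideal (K1 :&: K2) (\sum_k ulin B k * (c k - d k)).
  have -> : \sum_k ulin B k * (c k - d k) = a2 - a1.
    have h : a1 + x1 = a2 + x2 by rewrite -E1 -E2.
    by rewrite lin -Ec -Ed -[x1](addKr a1) h; ring.
  apply: genB; apply: gen_mono; try eassumption; move=> g [s [Hs ->]]; exists s;
    by rewrite inE negb_and Hs ?orbT.
have [A [HA Hk]] := Tor _ HW.
set e' := fun k => c k - d k - \sum_i A k i * ulin B i.
set e := fun k => proj K1 (e' k).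
have Se : forall k, SR_ideal K1 (e k) /\ SR_ideal K2 (e' k - e k).
  by move=> k; exact: (@SR_split _ _ _ _ H1 H2 (Hk k)).
set q := a1 + \sum_k ulin B k * e k.
have Q1 : SR_ideal K1 q.
  apply: genD => //; apply: gen_sum => k _ _; apply: genM; exact: (Se k).1.
have Q2 : SR_ideal K2 q.
  have -> : q = a2 - \sum_k ulin B k * (e' k - e k).
    rewrite lin /e' !lin antisym0 // subr0 /q.
    have h : a1 + x1 = a2 + x2 by rewrite -E1 -E2.
    by rewrite -Ec -Ed -[a2](addrK x2) -h; ring.
  apply: genB => //; apply: gen_sum => k _ _; apply: genM; exact: (Se k).2.
exists q, (\sum_k ulin B k * (c k - e k)); split; first exact: SR_inter.
split; first exact: U_of.
rewrite lin /q E1 Ec; ring.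
Qed.
End U.

Section Main.
Variable n : nat.
Local Notation Pl := {mpoly int[n]}.

Lemma Dc_sc (K : {set {set 'I_n}}) : is_simplicial_complex K -> Dc K.
Proof. by case. Qed.

Lemma Dc_I (K1 K2 : {set {set 'I_n}}) : Dc K1 -> Dc K2 -> Dc (K1 :&: K2).
Proof. by move=> H1 H2 s t; rewrite !inE => /andP[a b] st; rewrite (H1 _ _ a st) (H2 _ _ b st). Qed.

Lemma Dc_U (K1 K2 : {set {set 'I_n}}) : Dc K1 -> Dc K2 -> Dc (K1 :|: K2).
Proof. by move=> H1 H2 s t; rewrite !inE => /orP[a|b] st; [rewrite (H1 _ _ a st) | rewrite (H2 _ _ b st) orbT]. Qed.

Lemma Dc_Del (Z L : {set {set 'I_n}}) : Dc L -> Dc (Del Z L).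
Proof.
move=> HL s t; rewrite /Del /Ostar !inE => /andP[Hn Hs] st.
rewrite (HL _ _ Hs st) andbT; move: Hn; rewrite Hs /=; apply: contra.
move=> /existsP [u /andP[uZ ut]]; apply/existsP; exists u; rewrite uZ /=.
exact: subset_trans ut st.
Qed.

Lemma K_split (Z L : {set {set 'I_n}}) (k : Pl) : Dc L ->
  SR_ideal (Del Z L) k -> exists z l, mon_ideal Z z /\ SR_ideal L l /\ k = z + l.
Proof.
move=> HL Hk.
exists (\sum_(mm <- msupp k | supp mm \in L) k@_mm *: 'X_[mm]).
exists (\sum_(mm <- msupp k | supp mm \notin L) k@_mm *: 'X_[mm]).
split; last split; last by rewrite {1}(mpolyE k) (bigID (fun mm => supp mm \in L)).
  apply: gen_sum => mm Hm HmL.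
  have : supp mm \notin Del Z L.
    apply/negP => HK; move: Hm; rewrite mcoeff_msupp (@SR_coef _ _ k mm (@Dc_Del Z L HL) Hk HK).
    by rewrite eqxx.
  rewrite /Del /Ostar !inE HmL andbT negbK => /existsP [t /andP[tZ ts]].
  exact: mon_term ts tZ.
by apply: gen_sum => mm _ HmL; apply: SR_term.
Qed.
End Main.

Theorem lemma4p10 (m r : nat) (K1 K2 Z : {set {set 'I_m}}) (B : 'M[int]_(r, m)) :
  is_simplicial_complex K1 -> is_simplicial_complex K2 ->
  Z \subset (K1 :&: K2) ->
  set0 \notin Z ->
  Ostar (K1 :|: K2) Z \subset (K1 :&: K2) ->
  \rank (map_mx (intr : int -> rat) B) = r ->
  let W := K1 :&: K2 in
  let L := K1 :|: K2 in
  let K := Del Z L in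
  Tor1_vanishes B (SR_ideal K1) ->
  Tor1_vanishes B (SR_ideal K2) ->
  Tor1_vanishes B (SR_ideal K) ->
  Tor1_vanishes B (SR_ideal W) ->
  subquot_ring_iso
    (eqmod (Tor0_ideal B (SR_ideal K)))
    (fiber_dom (Tor0_ideal B (SR_ideal W)))
    (connsum_rel (Tor0_ideal B (SR_ideal K1)) (Tor0_ideal B (SR_ideal K2))
                 (ideal_add (mon_ideal Z) (SR_ideal L))).
Proof.
move=> S1 S2 ZW _ _ _ W L K _ _ _ TW.
have D1 := Dc_sc S1; have D2 := Dc_sc S2.
have DL : Dc L := Dc_U D1 D2.
have T00 : forall G1 G2 : {mpoly int[m]} -> Prop, ideal_add (ideal_gen G1) (ideal_gen G2) 0.
  by move=> G1 G2; exists 0, 0; rewrite addr0; split; [exact: gen0 | split; [exact: gen0|]].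
have ZK : forall z, mon_ideal Z z -> SR_ideal K z.
  move=> z0; apply: gen_mono => g [s [sZ ->]]; exists s; split => //.
  rewrite /K /Del /Ostar !inE negb_and negbK; apply/orP; left.
  have sL : (s \in K1) || (s \in K2) by move/subsetP: ZW => /(_ s sZ); rewrite !inE => /andP[->].
  by rewrite sL /=; apply/existsP; exists s; rewrite sZ subxx.
have LK : forall l, SR_ideal L l -> SR_ideal K l.
  move=> z0; apply: gen_mono => g [s [sL ->]]; exists s; split => //.
  by rewrite /K /Del inE negb_and sL orbT.
exists (fun x => (x, x)); split; last split; last split; last split; last split.
- by move=> x; rewrite /fiber_dom /= subrr; apply: T00.
- move=> x y; split.
  + move=> [k [u [Hk [Hu E]]]].
    have [z [l [Hz [Hl Ek]]]] := K_split DL Hk.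
    exists k; split; first by exists z, l.
    have Hu' : ideal_add (SR_ideal K1) (U_ideal B) u /\ ideal_add (SR_ideal K2) (U_ideal B) u.
      by split; exists 0, u; rewrite add0r; split => //; exact: gen0.
    by rewrite /= E addrAC subrr add0r.
  + move=> [w [[z [l [Hz [Hl Ew]]]] [H1 H2]]].
    have [l' [u [Hl' [Hu E]]]] := core D1 D2 TW H1 H2.
    exists (z + l + l'), u; split; last split => //.
      by apply: genD; [apply: genD; [apply: ZK | apply: LK] | apply: LK].
    by rewrite -Ew -addrA -E /=; ring.
- by move=> x y; exists 0; rewrite /= !subrr ?subr0; split; [exact: T00 | split; exact: T00].
- by move=> x y; exists 0; rewrite /= !subrr ?subr0; split; [exact: T00 | split; exact: T00].
- by exists 0; rewrite /= !subrr ?subr0; split; [exact: T00 | split; exact: T00].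
- move=> [a b] [pw [u [Hpw [Hu E]]]]; rewrite /= in E.
  have [P1 P2] := @SR_split _ _ _ pw D1 D2 Hpw.
  exists (a - proj K1 pw - u); exists 0; rewrite /= subr0; split.
    by exists 0, 0; rewrite addr0; split; [exact: gen0 | split; [exact: gen0|]].
  split.
    exists (- proj K1 pw), (- u); split; first exact: genN.
    by split; [exact: genN | ring].
  exists (pw - proj K1 pw), 0; split => //; split; first exact: gen0.
  rewrite addr0 -[a](subrK b) E; ring.
Qed.
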